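(* Let $\mathcal{C}\subset\mathbb{R}^N$ be a convex set, $p\in\mathcal{C}$ and $u\in\mathbb{R}^N$. Then the map $r\mapsto\|u\|_{\mathcal{C}}(p;r)$, $r>0$, is non-increasing, and $\limsup_{r\searrow0}\|u\|_{\mathcal{C}}(p;r)\le\|u\|$.
   Context: Local norm: for $p\in\mathcal{C}$, a vector $u$ and $r>0$, $\|u\|_{\mathcal{C}}(p;r)=\sup_{v\in\mathcal{C},\,\|v-p\|=r}\max\big(\langle u,v-p\rangle/r,\,0\big)$ if there exists $v\in\mathcal{C}$ with $\|v-p\|=r$, and $0$ otherwise. $\|\cdot\|$ is the Euclidean norm. *)

(* Defs.v *)
From HB Require Import structures.
From mathcomp Require Import all_boot all_order all_algebra.
From mathcomp Require Import all_classical all_reals all_analysis.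
Set Implicit Arguments. Unset Strict Implicit. Unset Printing Implicit Defensive.
Import Order.TTheory GRing.Theory Num.Theory.
Local Open Scope classical_set_scope.
Local Open Scope ring_scope.

Definition dotv (R : realType) (N : nat) (u v : 'rV[R]_N) : R :=
  \sum_(i < N) u ord0 i * v ord0 i.

Definition enorm (R : realType) (N : nat) (u : 'rV[R]_N) : R :=
  Num.sqrt (dotv u u).

Definition local_norm (R : realType) (N : nat) (C : set 'rV[R]_N)
    (u p : 'rV[R]_N) (r : R) : R :=
  if `[< exists v, C v /\ enorm (v - p) = r >] then
    sup [set x | exists v, [/\ C v, enorm (v - p) = r &
                  x = Num.max (dotv u (v - p) / r) 0]]
  else 0.

(* Main.v *)
Require Import Defs.
From HB Require Import structures.
From mathcomp Require Import all_boot all_order all_algebra.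
From mathcomp Require Import all_classical all_reals all_analysis.
From mathcomp Require Import ring lra.
Import Order.TTheory GRing.Theory Num.Theory.
Import numFieldTopology.Exports.
Local Open Scope classical_set_scope.
Local Open Scope ring_scope.

Set Implicit Arguments.
Section S.
Variables (R : realType) (N : nat).
Implicit Types u w : 'rV[R]_N.

Lemma dotv_quad u w (al be : R) :
  0 <= al ^+ 2 * dotv u u - 2 * al * be * dotv u w + be ^+ 2 * dotv w w.
Proof.
have -> : al ^+ 2 * dotv u u - 2 * al * be * dotv u w + be ^+ 2 * dotv w w
   = \sum_(i < N) (al * u ord0 i - be * w ord0 i) ^+ 2.
  rewrite /dotv !mulr_sumr -sumrN -!big_split /=.
  by apply: eq_bigr => i _; ring.
by apply: sumr_ge0 => i _; rewrite sqr_ge0.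
Qed.

Lemma dotv_ge0 u : 0 <= dotv u u.
Proof. by apply: sumr_ge0 => i _; rewrite -expr2 sqr_ge0. Qed.

Lemma dotv0 u w : dotv u u = 0 -> dotv u w = 0.
Proof.
move=> /eqP; rewrite /dotv psumr_eq0 => [/allP H|i _]; last by rewrite -expr2 sqr_ge0.
apply: big1 => i _.
have /H : i \in index_enum 'I_N by rewrite mem_index_enum.
by rewrite /= mulf_eq0 orbb => /eqP ->; rewrite mul0r.
Qed.

Lemma dotvC u w : dotv u w = dotv w u.
Proof. by apply: eq_bigr => i _; rewrite mulrC. Qed.

Lemma cs u w : dotv u w <= enorm u * enorm w.
Proof.
rewrite /enorm.
have hA := dotv_ge0 u; have hB := dotv_ge0 w.
have sA := sqr_sqrtr hA; have sB := sqr_sqrtr hB.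
have gA := sqrtr_ge0 (dotv u u); have gB := sqrtr_ge0 (dotv w w).
have [A0|] := eqVneq (Num.sqrt (dotv u u)) 0.
  rewrite (@dotv0 u w) ?A0 ?mul0r //.
  by rewrite -sA A0 expr0n.
have [B0|] := eqVneq (Num.sqrt (dotv w w)) 0.
  rewrite dotvC (@dotv0 w u) ?B0 ?mulr0 //.
  by rewrite -sB B0 expr0n.
move=> nB nA.
have pA : 0 < Num.sqrt (dotv u u) by rewrite lt_neqAle eq_sym nA gA.
have pB : 0 < Num.sqrt (dotv w w) by rewrite lt_neqAle eq_sym nB gB.
have H : 0 <= Num.sqrt (dotv w w) ^+ 2 * Num.sqrt (dotv u u) ^+ 2
   - 2 * Num.sqrt (dotv w w) * Num.sqrt (dotv u u) * dotv u w
   + Num.sqrt (dotv u u) ^+ 2 * Num.sqrt (dotv w w) ^+ 2.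
  have := dotv_quad u w (Num.sqrt (dotv w w)) (Num.sqrt (dotv u u)).
  have -> : Num.sqrt (dotv w w) ^+ 2 * Num.sqrt (dotv u u) ^+ 2 =
     Num.sqrt (dotv w w) ^+ 2 * dotv u u by rewrite sA.
  by rewrite sB.
have pxy := mulr_gt0 pA pB.
nra.
Qed.

Lemma enormZ (k : R) w : 0 <= k -> enorm (k *: w) = k * enorm w.
Proof.
move=> k0; rewrite /enorm.
have -> : dotv (k *: w) (k *: w) = k ^+ 2 * dotv w w.
  rewrite /dotv mulr_sumr; apply: eq_bigr => i _; rewrite !mxE; ring.
by rewrite sqrtrM ?sqr_ge0 // sqrtr_sqr ger0_norm.
Qed.

Lemma dotvZ (k : R) u w : dotv u (k *: w) = k * dotv u w.
Proof. rewrite /dotv mulr_sumr; apply: eq_bigr => i _; rewrite !mxE; ring. Qed.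

Lemma enorm_ge0 w : 0 <= enorm w.
Proof. exact: sqrtr_ge0. Qed.

Lemma elem_bound u w r : enorm w = r -> dotv u w / r <= enorm u.
Proof.
move=> <-.
have [->|] := eqVneq (enorm w) 0; first by rewrite invr0 mulr0 enorm_ge0.
move=> nz; have pz : 0 < enorm w by rewrite lt_neqAle eq_sym nz enorm_ge0.
by rewrite ler_pdivrMr // cs.
Qed.

Definition S (C : set 'rV[R]_N) u p r := [set x | exists v, [/\ C v, enorm (v - p) = r &
                  x = Num.max (dotv u (v - p) / r) 0]].

Lemma S_ub C u p r : ubound (S C u p r) (enorm u).
Proof.
move=> x [v [_ h ->]]; rewrite ge_max enorm_ge0 andbT; exact: elem_bound.
Qed.

Lemma ln_bounds C u p r : 0 <= local_norm C u p r <= enorm u.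
Proof.
rewrite /local_norm; case: asboolP => [[v [Cv hv]]|_]; last by rewrite lexx enorm_ge0.
have Sx : S C u p r (Num.max (dotv u (v - p) / r) 0) by exists v.
apply/andP; split.
  apply: le_trans (ub_le_sup _ Sx); first by rewrite le_max lexx orbT.
  by exists (enorm u); apply: S_ub.
by apply: ge_sup; [exists (Num.max (dotv u (v - p) / r) 0) | apply: S_ub].
Qed.
End S.

Theorem lemma2p4 (R : realType) (N : nat) (C : set 'rV[R]_N)
    (p u : 'rV[R]_N) :
  convex_set C -> C p ->
  (forall r s : R, 0 < r -> r <= s ->
     local_norm C u p s <= local_norm C u p r) /\
  (limf_esup (fun r : R => (local_norm C u p r)%:E) (0%R)^'+
     <= (enorm u)%:E)%E.
Proof.
move=> cvx Cp; split; last first.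
  rewrite /limf_esup.
  apply: (@le_trans _ _ (ereal_sup [set (local_norm C u p r)%:E | r in setT])).
    apply: ereal_inf_lbound; exists setT => //; exact: filterT.
  apply: ge_ereal_sup => x [r _ <-]; rewrite lee_fin.
  by case/andP: (@ln_bounds R N C u p r).
move=> r s r0 rs.
have s0 : 0 < s by apply: lt_le_trans rs.
rewrite {1}/local_norm; case: asboolP => [[v0 [Cv0 hv0]]|_]; last by case/andP: (@ln_bounds R N C u p r).
have k0 : 0 <= r / s by rewrite divr_ge0 // ltW.
have k1 : r / s <= 1 by rewrite ler_pdivrMr // mul1r.
pose k := Itv01 k0 k1.
have key : forall v, C v -> enorm (v - p) = s ->
   exists w, [/\ C w, enorm (w - p) = r & dotv u (w - p) / r = dotv u (v - p) / s].
  move=> v Cv hv.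
  have wE : @conv R (convex_lmodType 'rV[R]_N) k v p - p = (r / s) *: (v - p).
    rewrite /conv /= /unstable.onem scalerBl scale1r scalerBr.
    by rewrite addrA (addrAC _ p) addrK.
  exists (@conv R (convex_lmodType 'rV[R]_N) k v p); split.
  - apply: set_mem; apply: cvx; exact: mem_set.
  - by rewrite wE enormZ // hv divfK // gt_eqF.
  - rewrite wE dotvZ; field; by rewrite !gt_eqF.

rewrite /local_norm; case: asboolP => [_|]; last first.
  move=> []; have [w [Cw hw _]] := key v0 Cv0 hv0; by exists w.
apply: ge_sup.
  by exists (Num.max (dotv u (v0 - p) / s) 0); exists v0.
move=> x [v [Cv hv ->]].
have [w [Cw hw e]] := key v Cv hv.
apply: ub_le_sup; first by exists (enorm u); apply: S_ub.
by exists w; split => //; rewrite e.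
Qed.
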